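(* Let $R$ be a Noetherian ring, $I$ an ideal of $R$, and $M$ a finitely generated $R$-module. Let $J=(x_1,\ldots,x_s)\subseteq I$ be a reduction of $I$ relative to $M$, and fix an integer $\ell \geq \mathrm{r}_J(I,M)$ such that $$[(x_1,\ldots,x_{i-1})M :_M x_i]\cap I^{\ell+1}M = (x_1,\ldots,x_{i-1})I^{\ell}M \quad \text{for } i=1,\ldots,s.$$ Then for all $n\geq \ell+1$, $$[(x_1,\ldots,x_{i-1})M :_M x_i]\cap I^{n}M = (x_1,\ldots,x_{i-1})I^{n-1}M \quad \text{for } i=1,\ldots,s.$$
   Context: For $i=1$ the ideal $(x_1,\ldots,x_{i-1})$ is the zero ideal. An ideal $J\subseteq I$ is a reduction of $I$ relative to $M$ if $JI^nM=I^{n+1}M$ for some $n\geq 0$; then $\mathrm{r}_J(I,M)=\min\{m\in\mathbb N: JI^mM=I^{m+1}M\}$. *)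

(* Defs.v *)
From mathcomp Require Import all_boot all_order all_algebra.
Set Implicit Arguments. Unset Strict Implicit. Unset Printing Implicit Defensive.
Import GRing.Theory.
Local Open Scope ring_scope.

Section Defs.
Variable R : comPzRingType.

Definition seteq {T : Type} (A B : T -> Prop) := forall t, A t <-> B t.
Definition interP {T : Type} (A B : T -> Prop) : T -> Prop := fun t => A t /\ B t.

Definition is_ideal (I : R -> Prop) : Prop :=
  [/\ I 0, (forall a b, I a -> I b -> I (a + b)) & (forall r a, I a -> I (r * a))].

Definition ideal_gen (g : seq R) : R -> Prop :=
  fun a => exists c : 'I_(size g) -> R, a = \sum_(i < size g) c i * g`_i.

Definition noetherian : Prop :=
  forall I : R -> Prop, is_ideal I -> exists g : seq R, seteq I (ideal_gen g).

Variable M : lmodType R.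

Definition fin_gen_mod : Prop :=
  exists g : seq M, forall m : M,
    exists c : 'I_(size g) -> R, m = \sum_(i < size g) c i *: g`_i.

Definition span (S : M -> Prop) : M -> Prop :=
  fun m => exists l : seq (R * M), (forall p, p \in l -> S p.2) /\
                                   m = \sum_(p <- l) p.1 *: p.2.

Definition ideal_mul (I : R -> Prop) (N : M -> Prop) : M -> Prop :=
  span (fun m => exists a n, [/\ I a, N n & m = a *: n]).

Definition pow_mod (I : R -> Prop) (n : nat) : M -> Prop :=
  iter n (ideal_mul I) (fun _ => True).

Definition seq_mul (xs : seq R) (N : M -> Prop) : M -> Prop :=
  ideal_mul (ideal_gen xs) N.

Definition colon (N : M -> Prop) (x : R) : M -> Prop := fun m => N (x *: m).

Definition is_reduction (I : R -> Prop) (xs : seq R) : Prop :=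
  (forall j, (j < size xs)%N -> I xs`_j) /\
  exists n, seteq (seq_mul xs (pow_mod I n)) (pow_mod I n.+1).

Definition is_red_number (I : R -> Prop) (xs : seq R) (r : nat) : Prop :=
  seteq (seq_mul xs (pow_mod I r)) (pow_mod I r.+1) /\
  forall m, (m < r)%N -> ~ seteq (seq_mul xs (pow_mod I m)) (pow_mod I m.+1).

End Defs.

(* Main.v *)
Require Import Defs.
From mathcomp Require Import all_boot all_order all_algebra.
Set Implicit Arguments. Unset Strict Implicit. Unset Printing Implicit Defensive.
Import GRing.Theory.
Local Open Scope ring_scope.

Definition subm {R : comPzRingType} {M : lmodType R} (P : M -> Prop) :=
  [/\ P 0, forall a b, P a -> P b -> P (a + b) & forall r a, P a -> P (r *: a)].

Lemma span_subm {R : comPzRingType} {M : lmodType R} (S : M -> Prop) :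
  subm (Defs.span S).
Proof.
split.
- by exists [::]; split => //; rewrite big_nil.
- move=> a b [la [Ha ->]] [lb [Hb ->]]; exists (la ++ lb); split.
    by move=> p; rewrite mem_cat => /orP[/Ha|/Hb].
  by rewrite big_cat.
- move=> r a [la [Ha ->]]; exists (map (fun p => (r * p.1, p.2)) la); split.
    by move=> p /mapP[q /Ha Hq ->].
  by rewrite big_map scaler_sumr; apply: eq_bigr => p _; rewrite scalerA.
Qed.

Lemma subm_sum {R : comPzRingType} {M : lmodType R} (P : M -> Prop) k (F : nat -> M) :
  subm P -> (forall j, (j < k)%N -> P (F j)) -> P (\sum_(j < k) F j).
Proof.
move=> [P0 PD _] HF; elim: k HF => [|k IH] HF; first by rewrite big_ord0.
rewrite big_ord_recr /=; apply: PD; last exact: HF.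
by apply: IH => j hj; apply: HF; apply: ltnW.
Qed.

Lemma span_min {R : comPzRingType} {M : lmodType R} (S P : M -> Prop) :
  subm P -> (forall m, S m -> P m) -> forall m, Defs.span S m -> P m.
Proof.
move=> [P0 PD PZ] HS m [l [Hl ->]]; elim: l Hl => [|p l IH] Hl; first by rewrite big_nil.
rewrite big_cons; apply: PD; first by apply: PZ; apply: HS; apply: Hl; rewrite mem_head.
by apply: IH => q hq; apply: Hl; rewrite in_cons hq orbT.
Qed.

Lemma span_in {R : comPzRingType} {M : lmodType R} (S : M -> Prop) m :
  S m -> Defs.span S m.
Proof.
by move=> Sm; exists [:: (1, m)]; split; [move=> p; rewrite inE => /eqP -> | rewrite big_seq1 scale1r].
Qed.

Lemma pow_subm {R : comPzRingType} {M : lmodType R} (I : R -> Prop) n :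
  subm (pow_mod (M:=M) I n).
Proof. by case: n => [|n]; [ split | exact: span_subm ]. Qed.

Lemma pow_anti {R : comPzRingType} {M : lmodType R} (I : R -> Prop) n m :
  pow_mod (M:=M) I n.+1 m -> pow_mod I n m.
Proof.
apply: span_min; first exact: pow_subm.
by move=> _ [a [n0 [_ Hn ->]]]; case: (pow_subm (M:=M) I n) => _ _; apply.
Qed.

Lemma pow_anti_le {R : comPzRingType} {M : lmodType R} (I : R -> Prop) n k m :
  (n <= k)%N -> pow_mod (M:=M) I k m -> pow_mod I n m.
Proof.
move=> /subnK <-; elim: (k - n)%N => [|d IH] //= H.
by apply: IH; apply: pow_anti.
Qed.

Definition Lt {R : comPzRingType} {M : lmodType R} (t : seq R) (N : M -> Prop) (m : M) :=
  exists b : nat -> M, (forall j, N (b j)) /\ m = \sum_(j < size t) t`_j *: b j.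

Lemma Lt_subm {R : comPzRingType} {M : lmodType R} t (N : M -> Prop) :
  subm N -> subm (Lt t N).
Proof.
move=> [N0 ND NZ]; split.
- by exists (fun _ => 0); split => //; rewrite big1 // => j _; rewrite scaler0.
- move=> a c [ba [Ha ->]] [bc [Hc ->]]; exists (fun j => ba j + bc j); split.
    by move=> j; apply: ND.
  by rewrite -big_split; apply: eq_bigr => j _; rewrite scalerDr.
- move=> r a [ba [Ha ->]]; exists (fun j => r *: ba j); split; first by move=> j; apply: NZ.
  by rewrite scaler_sumr; apply: eq_bigr => j _; rewrite !scalerA mulrC.
Qed.

Lemma gen_in {R : comPzRingType} (t : seq R) j : (j < size t)%N -> ideal_gen t t`_j.
Proof.
move=> hj; exists (fun i : 'I_(size t) => if i == Ordinal hj then 1 else 0).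
rewrite (bigD1 (Ordinal hj)) //= eqxx mul1r big1 ?addr0 // => i /negPf ->.
by rewrite mul0r.
Qed.

Lemma Lt_seq_mul {R : comPzRingType} {M : lmodType R} t (N : M -> Prop) :
  subm N -> seteq (seq_mul t N) (Lt t N).
Proof.
move=> sN m; split.
- apply: span_min; first exact: Lt_subm.
  move=> _ [a [n [[c ->] Nn ->]]].
  pose cc j := odflt 0 (omap c (insub j)).
  exists (fun j => cc j *: n); split; first by move=> j; case: sN => _ _ NZ; apply: NZ.
  rewrite scaler_suml; apply: eq_bigr => i _; rewrite scalerA mulrC /cc valK /=.
  by [].
- move=> [b [Hb ->]]; apply: (subm_sum (P := seq_mul t N) (F := fun j => t`_j *: b j)) => [|j hj]; first exact: span_subm.
  apply: span_in; exists t`_j, (b j); split => //; exact: gen_in.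
Qed.

Lemma sum_size {R : comPzRingType} {M : lmodType R} (t : seq R) n (F : nat -> M) :
  size t = n -> \sum_(j < size t) F j = \sum_(j < n) F j.
Proof. by move=> ->. Qed.

Definition L {R : comPzRingType} {M : lmodType R} (x : seq R) k (N : M -> Prop) (m : M) :=
  exists b : nat -> M, (forall j, N (b j)) /\ m = \sum_(j < k) x`_j *: b j.

Lemma seq_mul_L {R : comPzRingType} {M : lmodType R} x k (N : M -> Prop) :
  subm N -> (k <= size x)%N -> seteq (seq_mul (take k x) N) (L x k N).
Proof.
move=> sN hk m; have E := Lt_seq_mul (take k x) sN m; split.
  move=> /E [b [Hb ->]]; exists b; split => //.
  rewrite (@sum_size _ _ _ _ (fun j => (take k x)`_j *: b j) (size_takel hk)); apply: eq_bigr => j _; rewrite nth_take //.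
move=> H; apply E; case: H => [b [Hb ->]]; exists b; split => //.
rewrite (@sum_size _ _ _ _ (fun j => (take k x)`_j *: b j) (size_takel hk)); apply: eq_bigr => j _; rewrite nth_take //.
Qed.

Lemma L_subm {R : comPzRingType} {M : lmodType R} x k (N : M -> Prop) :
  subm N -> subm (L x k N).
Proof.
move=> [N0 ND NZ]; split.
- by exists (fun _ => 0); split => //; rewrite big1 // => j _; rewrite scaler0.
- move=> a c [ba [Ha ->]] [bc [Hc ->]]; exists (fun j => ba j + bc j); split.
    by move=> j; apply: ND.
  by rewrite -big_split; apply: eq_bigr => j _; rewrite scalerDr.
- move=> r a [ba [Ha ->]]; exists (fun j => r *: ba j); split; first by move=> j; apply: NZ.
  by rewrite scaler_sumr; apply: eq_bigr => j _; rewrite !scalerA mulrC.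
Qed.

Lemma L_mono {R : comPzRingType} {M : lmodType R} x i k (N N' : M -> Prop) m :
  N 0 -> (i <= k)%N -> (forall y, N y -> N' y) -> L x i N m -> L x k N' m.
Proof.
move=> N0 hik NN' [b [Hb ->]].
exists (fun j => if (j < i)%N then b j else 0); split.
  by move=> j; case: ifP => _; apply: NN'.
rewrite (big_ord_widen k (fun j => x`_j *: b j) hik) big_mkcond /=; apply: eq_bigr => j _.
by case: ifP => _; rewrite ?scaler0.
Qed.

Lemma L_rec {R : comPzRingType} {M : lmodType R} x k (N : M -> Prop) m :
  L x k.+1 N m -> exists m' b, [/\ L x k N m', N b & m = m' + x`_k *: b].
Proof.
move=> [b [Hb ->]]; exists (\sum_(j < k) x`_j *: b j), (b k); split => //.
  by exists b.
by rewrite big_ord_recr.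
Qed.

Lemma gen_pow {R : comPzRingType} {M : lmodType R} (I : R -> Prop) n a (m : M) :
  I a -> pow_mod I n m -> pow_mod I n.+1 (a *: m).
Proof. by move=> Ia Hm; apply: span_in; exists a, m. Qed.

Lemma L_pow {R : comPzRingType} {M : lmodType R} (I : R -> Prop) x k n (m : M) :
  (forall j, (j < size x)%N -> I x`_j) -> (k <= size x)%N ->
  L x k (pow_mod I n) m -> pow_mod I n.+1 m.
Proof.
move=> hI hk [b [Hb ->]].
apply: (@subm_sum _ _ _ _ (fun j => x`_j *: b j)) => [|j hj]; first exact: pow_subm.
apply: gen_pow => //; apply: hI; exact: leq_trans hj hk.
Qed.

Lemma scale_L {R : comPzRingType} {M : lmodType R} (I : R -> Prop) x k n a (m : M) :
  I a -> L x k (pow_mod I n) m -> L x k (pow_mod I n.+1) (a *: m).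
Proof.
move=> Ia [b [Hb ->]]; exists (fun j => a *: b j); split; first by move=> j; apply: gen_pow.
by rewrite scaler_sumr; apply: eq_bigr => j _; rewrite !scalerA mulrC.
Qed.

Lemma red_all {R : comPzRingType} {M : lmodType R} (I : R -> Prop) x r :
  (forall m : M, pow_mod I r.+1 m -> L x (size x) (pow_mod I r) m) ->
  forall n, (r <= n)%N -> forall m : M, pow_mod I n.+1 m -> L x (size x) (pow_mod I n) m.
Proof.
move=> Hr n /subnK <-; elim: (n - r)%N => [|d IH] // m.
apply: (@span_min _ _ _ (L x (size x) (pow_mod I (d + r).+1))); first exact: L_subm (pow_subm _ _).
move=> _ [a [m0 [Ia Hm0 ->]]]; apply: scale_L => //; exact: IH.
Qed.

Lemma True_subm {R : comPzRingType} {M : lmodType R} : subm (fun _ : M => True).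
Proof. by []. Qed.
Unset Implicit Arguments.

Theorem proposition3p5 (R : comPzRingType) (M : lmodType R) (I : R -> Prop)
    (x : seq R) (l : nat) :
  noetherian R -> is_ideal I -> fin_gen_mod M ->
  is_reduction M I x ->
  (exists r, is_red_number M I x r /\ (r <= l)%N) ->
  (forall i, (i < size x)%N ->
     seteq (interP (colon (seq_mul (take i x) (fun _ : M => True)) x`_i)
                   (pow_mod (M:=M) I l.+1))
           (seq_mul (take i x) (pow_mod (M:=M) I l))) ->
  forall n i, (l.+1 <= n)%N -> (i < size x)%N ->
     seteq (interP (colon (seq_mul (take i x) (fun _ : M => True)) x`_i)
                   (pow_mod (M:=M) I n))
           (seq_mul (take i x) (pow_mod (M:=M) I n.-1)).
Proof.
move=> _ _ _ [hI _] [r [[Hr _] hrl]] H.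
have Tcv : forall k (m : M), (k <= size x)%N ->
    (colon (seq_mul (take k x) (fun _ : M => True)) x`_k m <-> L x k (fun _ => True) (x`_k *: m)).
  by move=> k m hk; exact: (@seq_mul_L R M x k _ True_subm hk (x`_k *: m)).
have Pcv : forall k p (m : M), (k <= size x)%N ->
    (seq_mul (take k x) (pow_mod I p) m <-> L x k (pow_mod I p) m).
  by move=> k p m hk; exact: (@seq_mul_L R M x k _ (pow_subm I p) hk m).
have Hred : forall p, (r <= p)%N -> forall m : M, pow_mod I p.+1 m -> L x (size x) (pow_mod I p) m.
  apply: red_all => m /Hr.
  have := Pcv (size x) r m (leqnn _); rewrite take_size => E /E; exact.
have Fwd : forall n, (l.+1 <= n)%N -> forall i, (i < size x)%N -> forall m : M,
    colon (seq_mul (take i x) (fun _ : M => True)) x`_i m -> pow_mod I n m ->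
    L x i (pow_mod I n.-1) m.
  move=> n /subnK <-; elim: (n - l.+1)%N => [|d IH] i hi m Hc Hp.
    by apply/Pcv; [exact: ltnW | apply/(H i hi)].
  set n0 := (d + l.+1)%N in IH *.
  have n0pos : (0 < n0)%N by rewrite /n0 addnS.
  have HiT : L x i (fun _ => True) m.
    have : seq_mul (take i x) (pow_mod I l) m.
      apply/(H i hi); split => //; apply: (pow_anti_le (n := l.+1) _ Hp).
      by rewrite /n0 leq_addl.
    move/Pcv => /(_ (ltnW hi)); apply: L_mono => //; by case: (pow_subm (M:=M) I l).
  have Hs := Hred n0 (leq_trans hrl (leq_trans (leqnSn _) (leq_addl _ _))) m Hp.
  rewrite /= -/n0.
  have desc : forall e k, k = (i + e)%N -> (k <= size x)%N -> L x k (pow_mod I n0) m ->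
      L x i (pow_mod I n0) m.
    elim=> [|e IHe] k -> hk; first by rewrite addn0.
    rewrite addnS in hk *; move=> /L_rec [m' [b [Hm' Hb Em]]].
    apply: (IHe _ erefl (ltnW hk)).
    have hk' : (i + e < size x)%N by [].
    have Hxb : L x (i + e) (fun _ => True) (x`_(i + e) *: b).
      have -> : x`_(i + e) *: b = m + (-1) *: m' by rewrite Em scaleN1r addrAC subrr add0r.
      have [_ LD LZ] := L_subm x (i + e) (@True_subm R M).
      apply: LD; first by apply: (L_mono _ _ _ HiT) => //; exact: leq_addr.
      apply: LZ; apply: (L_mono _ (leqnn _) _ Hm') => //; by case: (pow_subm (M:=M) I n0).
    have := IH (i + e)%N hk' b (proj2 (Tcv _ _ (ltnW hk')) Hxb) Hb.
    move/(scale_L (a := x`_(i + e)) (hI _ hk')); rewrite prednK // => Hxb'.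
    rewrite Em; have [_ LD _] := L_subm x (i + e) (pow_subm (M:=M) I n0); exact: LD.
  apply: (desc (size x - i)%N (size x)) => //; by rewrite subnKC // ltnW.
move=> n i hn hi m; split.
  by move=> [Hc Hp]; apply/Pcv; [exact: ltnW | exact: Fwd].
move/Pcv => /(_ (ltnW hi)) HL; split.
  apply/Tcv; first exact: ltnW.
  have [_ _ LZ] := L_subm x i (pow_subm (M:=M) I n.-1).
  apply: (L_mono _ (leqnn _) _ (LZ x`_i _ HL)) => //; by case: (pow_subm (M:=M) I n.-1).
have -> : n = n.-1.+1 by rewrite prednK // (leq_trans _ hn).
exact: (L_pow hI (ltnW hi) HL).
Qed.
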